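(* Every affine liner is $2$-balanced, i.e., all its lines have the same cardinality.
   Context: A liner is a set $X$ of points with a family of subsets called lines such that any two distinct points lie in a unique line and every line contains at least two points. For distinct $x,y$, $\overline{xy}$ is the line through them and $\overline{xx}:=\{x\}$. A liner $X$ is affine if for all $o,x,y\in X$ and $p\in\overline{xy}\setminus\overline{ox}$ there exists $u\in\overline{oy}$ such that for every $v\in\overline{oy}$: $u=v$ if and only if $\overline{vp}\cap\overline{ox}=\varnothing$. *)

(* Defs.v *)
(** Set equality is extensional. *)
Definition is_liner {X : Type} (L : (X -> Prop) -> Prop) : Prop :=
  (forall x y : X, x <> y ->
     exists l, L l /\ l x /\ l y /\
       forall l', L l' -> l' x -> l' y -> forall z, l' z <-> l z) /\
  (forall l, L l -> exists x y : X, x <> y /\ l x /\ l y).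

(** [line L x y] is the line through [x] and [y] when [x <> y],
    and the singleton [{x}] when [x = y]. *)
Definition line {X : Type} (L : (X -> Prop) -> Prop) (x y : X) : X -> Prop :=
  fun z => (x = y /\ z = x) \/ (x <> y /\ exists l, L l /\ l x /\ l y /\ l z).

Definition is_affine {X : Type} (L : (X -> Prop) -> Prop) : Prop :=
  forall o x y p : X, line L x y p -> ~ line L o x p ->
    exists u, line L o y u /\
      forall v, line L o y v ->
        (u = v <-> ~ exists z, line L v p z /\ line L o x z).

Definition equipotent {X : Type} (A B : X -> Prop) : Prop :=
  exists (f : {x | A x} -> {x | B x}) (g : {x | B x} -> {x | A x}),
    (forall a, g (f a) = a) /\ (forall b, f (g b) = b).

(* Main.v *)
Require Import Defs.
From Stdlib Require Import Classical ClassicalEpsilon ProofIrrelevance.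

Lemma sig_eq {X : Type} (P : X -> Prop) (a b : {x | P x}) :
  proj1_sig a = proj1_sig b -> a = b.
Proof. destruct a, b; simpl; intro; subst; f_equal; apply proof_irrelevance. Qed.

Lemma bij_rel {X : Type} (A B : X -> Prop) (R : X -> X -> Prop) :
  (forall z, A z -> exists w, B w /\ R z w /\ forall w', B w' -> R z w' -> w' = w) ->
  (forall w, B w -> exists z, A z /\ R z w /\ forall z', A z' -> R z' w -> z' = z) ->
  equipotent A B.
Proof.
  intros H1 H2.
  assert (F : forall x : {z | A z}, {w : {w | B w} | R (proj1_sig x) (proj1_sig w)}).
  { intros [z Hz]. destruct (constructive_indefinite_description _ (H1 z Hz)) as [w [Hw [Rw _]]].
    exists (exist _ w Hw). exact Rw. }
  assert (G : forall y : {w | B w}, {z : {z | A z} | R (proj1_sig z) (proj1_sig y)}).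
  { intros [w Hw]. destruct (constructive_indefinite_description _ (H2 w Hw)) as [z [Hz [Rz _]]].
    exists (exist _ z Hz). exact Rz. }
  exists (fun x => proj1_sig (F x)), (fun y => proj1_sig (G y)). split.
  - intros x. apply sig_eq. destruct (F x) as [y Hy]; simpl.
    destruct (G y) as [x' Hx']; simpl.
    destruct (H2 _ (proj2_sig y)) as [z0 [_ [_ U]]].
    rewrite (U _ (proj2_sig x') Hx'), (U _ (proj2_sig x) Hy). reflexivity.
  - intros y. apply sig_eq. destruct (G y) as [x Hx]; simpl.
    destruct (F x) as [y' Hy']; simpl.
    destruct (H1 _ (proj2_sig x)) as [w0 [_ [_ U]]].
    rewrite (U _ (proj2_sig y') Hy'), (U _ (proj2_sig y) Hx). reflexivity.
Qed.

Lemma equi_sym {X : Type} (A B : X -> Prop) : equipotent A B -> equipotent B A.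
Proof. intros [f [g [H1 H2]]]. exists g, f. auto. Qed.

Lemma equi_trans {X : Type} (A B C : X -> Prop) :
  equipotent A B -> equipotent B C -> equipotent A C.
Proof.
  intros [f1 [g1 [H1 H2]]] [f2 [g2 [H3 H4]]].
  exists (fun a => f2 (f1 a)), (fun c => g1 (g2 c)). split; intros.
  - rewrite H3, H1; auto.
  - rewrite H2, H4; auto.
Qed.

Section S.
Variable X : Type.
Variable L : (X -> Prop) -> Prop.
Hypothesis HL : is_liner L.
Hypothesis HA : is_affine L.

Lemma uniq_ext l l' x y : L l -> L l' -> x <> y -> l x -> l y -> l' x -> l' y ->
  forall z, l z <-> l' z.
Proof.
  intros Ll Ll' nxy lx ly l'x l'y z.
  destruct (proj1 HL x y nxy) as [l0 [_ [_ [_ U]]]].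
  rewrite (U l Ll lx ly z), (U l' Ll' l'x l'y z). tauto.
Qed.

Lemma line_iff l x y z : x <> y -> L l -> l x -> l y -> (line L x y z <-> l z).
Proof.
  intros nxy Ll lx ly. unfold line. split.
  - intros [[? _]|[_ [l' [Ll' [l'x [l'y l'z]]]]]]; [contradiction|].
    apply (uniq_ext l' l x y); auto.
  - intros lz. right. split; auto. exists l; auto.
Qed.

Lemma line_sym x y t : line L x y t -> line L y x t.
Proof.
  unfold line. intros [[? ?]|[? [l [? [? [? ?]]]]]].
  - left; split; congruence.
  - right; split; [congruence| exists l; tauto].
Qed.

Lemma line_r x y : line L x y y.
Proof.
  unfold line. destruct (classic (x = y)).
  - left; auto.
  - right; split; auto. destruct (proj1 HL x y H) as [l [? [? [? _]]]]. exists l; tauto.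
Qed.

Definition disj a b z w := ~ exists t, line L z w t /\ line L a b t.

Lemma disj_sym a b z w : disj b a w z -> disj a b z w.
Proof.
  intros H [t [H1 H2]]. apply H. exists t. split; apply line_sym; auto.
Qed.

Lemma core l1 l2 o a b : L l1 -> L l2 -> l1 o -> l2 o -> l1 a -> l2 b ->
  a <> o -> b <> o -> ~ l1 b ->
  forall z, l1 z -> z <> a ->
  exists w, l2 w /\ disj a b z w /\ forall w', l2 w' -> disj a b z w' -> w' = w.
Proof.
  intros L1 L2 l1o l2o l1a l2b nao nbo nl1b z l1z nza.
  assert (nab : b <> a) by (intro; subst; contradiction).
  assert (h1 : line L a o z) by (apply (line_iff l1); auto).
  assert (h2 : ~ line L b a z).
  { intros [[? _]|[_ [m [Lm [mb [ma mz]]]]]]; [contradiction|].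
    apply nl1b. apply (uniq_ext m l1 a z); auto. }
  destruct (HA b a o z h1 h2) as [u [hu U]].
  exists u. split; [|split].
  - apply (line_iff l2 b o u); auto.
  - intros [t [H1 H2]]. apply (proj1 (U u hu) eq_refl).
    exists t. split; apply line_sym; auto.
  - intros w' l2w' D. symmetry. apply (U w').
    + apply (line_iff l2 b o w'); auto.
    + intros [t [H1 H2]]. apply D. exists t. split; apply line_sym; auto.
Qed.

Lemma lemA l1 l2 o a : L l1 -> L l2 -> l1 o -> l2 o -> l1 a -> ~ l2 a ->
  equipotent l1 l2.
Proof.
  intros L1 L2 l1o l2o l1a nl2a.
  assert (Hb : exists b, l2 b /\ b <> o).
  { destruct (proj2 HL l2 L2) as [x [y [nxy [lx ly]]]].
    destruct (classic (x = o)); [exists y | exists x]; split; auto; congruence. }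
  destruct Hb as [b [l2b nbo]].
  assert (nao : a <> o) by (intro; subst; contradiction).
  assert (nl1b : ~ l1 b).
  { intro l1b. apply nl2a. apply (uniq_ext l1 l2 o b); auto. }
  apply bij_rel with (R := fun z w => (z = a /\ w = b) \/ (z <> a /\ disj a b z w)).
  - intros z l1z. destruct (classic (z = a)).
    + subst. exists b. split; [|split]; auto.
      intros w' _ [[_ ?]|[? _]]; auto; contradiction.
    + destruct (core l1 l2 o a b) with (z := z) as [w [Hw [Pw U]]]; auto.
      exists w. split; [|split]; auto.
      intros w' Hw' [[? _]|[_ ?]]; [contradiction | apply U; auto].
  - intros w l2w. destruct (classic (w = b)).
    + subst. exists a. split; [|split]; auto.
      intros z' _ [[? _]|[_ Pz]]; auto. exfalso. apply Pz.
      exists b. split; apply line_r.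
    + destruct (core l2 l1 o b a) with (z := w) as [z [Hz [Pz U]]]; auto.
      exists z. split; [|split]; auto.
      * right. split.
        -- intro; subst. apply Pz. exists a. split; apply line_r.
        -- apply disj_sym; auto.
      * intros z' Hz' [[_ ?]|[_ P]]; [contradiction|]. apply U; auto.
        apply disj_sym; auto.
Qed.

Lemma lemB l1 l2 o : L l1 -> L l2 -> l1 o -> l2 o -> equipotent l1 l2.
Proof.
  intros L1 L2 l1o l2o.
  destruct (classic (exists a, l1 a /\ ~ l2 a)) as [[a [? ?]]|N1].
  { apply (lemA l1 l2 o a); auto. }
  destruct (classic (exists a, l2 a /\ ~ l1 a)) as [[a [? ?]]|N2].
  { apply equi_sym. apply (lemA l2 l1 o a); auto. }
  apply bij_rel with (R := fun z w => z = w).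
  - intros z Hz. exists z. split; [|split]; auto.
    apply NNPP. intro. apply N1. eauto.
  - intros z Hz. exists z. split; [|split]; auto.
    apply NNPP. intro. apply N2. eauto.
Qed.

End S.

Theorem theorem3p3p17 (X : Type) (L : (X -> Prop) -> Prop) :
  is_liner L -> is_affine L ->
  forall l1 l2, L l1 -> L l2 -> equipotent l1 l2.
Proof.
  intros HL HA l1 l2 L1 L2.
  destruct (proj2 HL l1 L1) as [a [_ [_ [l1a _]]]].
  destruct (proj2 HL l2 L2) as [b [_ [_ [l2b _]]]].
  destruct (classic (l2 a)).
  - apply (lemB X L HL HA l1 l2 a); auto.
  - assert (a <> b) by (intro; subst; contradiction).
    destruct (proj1 HL a b H0) as [m [Lm [ma [mb _]]]].
    apply equi_trans with m.
    + apply (lemB X L HL HA l1 m a); auto.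
    + apply (lemB X L HL HA m l2 b); auto.
Qed.
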